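(* Let $\mathcal{C}$ be a simplicial complex on ground set $V$ and $\mathbf{d}=(d_u)_{u\in V}$ with all $d_u\ge2$, and assume $\mathcal{A}_{\mathcal{C},\mathbf{d}}$ is unimodular. Let $v$ be a vertex of $\mathcal{C}$ and let $\mathbf{d}'$ be obtained from $\mathbf{d}$ by deleting the entry $d_v$. Then $\mathcal{A}_{\operatorname{link}_v(\mathcal{C}),\mathbf{d}'}$ is unimodular.
   Context: A simplicial complex on a finite ground set $V$ is a family of subsets of $V$ closed under subsets; facets are inclusion-maximal faces; a vertex $v$ of $\mathcal{C}$ means $\{v\}\in\mathcal{C}$. $\operatorname{link}_v(\mathcal{C})=\{F\setminus\{v\}: v\in F\in\mathcal{C}\}$ on ground set $V\setminus\{v\}$. $\mathcal{A}_{\mathcal{C},\mathbf{d}}$ is the $0/1$ matrix with columns indexed by $\mathbf{i}\in\prod_{u\in V}[d_u]$ and rows indexed by pairs $(F,\mathbf{e})$, $F$ a facet, $\mathbf{e}\in\prod_{u\in F}[d_u]$; entry $1$ iff $\mathbf{e}=\mathbf{i}|_F$. An integer matrix is unimodular if every circuit (nonzero integer kernel vector with coprime entries and inclusion-minimal support among nonzero kernel vectors) has all entries in $\{0,\pm1\}$. *)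

(* Defs.v *)
From mathcomp Require Import all_boot all_order all_algebra.
Set Implicit Arguments. Unset Strict Implicit. Unset Printing Implicit Defensive.
Import GRing.Theory Num.Theory.
Local Open Scope ring_scope.

Definition is_complex (V : finType) (C : {set {set V}}) : Prop :=
  forall F G : {set V}, F \in C -> G \subset F -> G \in C.

Definition is_facet (V : finType) (C : {set {set V}}) (F : {set V}) : bool :=
  (F \in C) && [forall G in C, (F \subset G) ==> (G == F)].

Definition cols (V : finType) (d : V -> nat) : finType :=
  {dffun forall u : V, 'I_(d u)}.

(* Rows are indexed by pairs (F, e) with F a facet and e in prod_{u in F}[d_u];
   we represent e by any full index e' whose restriction to F is e (duplicate
   rows do not affect the kernel, circuits, or unimodularity). *)
Definition Aentry (V : finType) (d : V -> nat) (F : {set V}) (e i : cols d) : int :=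
  ([forall u in F, e u == i u] : bool)%:R.

Definition in_kernel (V : finType) (C : {set {set V}}) (d : V -> nat)
  (x : cols d -> int) : Prop :=
  forall (F : {set V}) (e : cols d), is_facet C F ->
    \sum_(i : cols d) Aentry F e i * x i = 0.

Arguments in_kernel {V} C d x.

Definition supp (V : finType) (d : V -> nat) (x : cols d -> int) : {set cols d} :=
  [set i | x i != 0].

Definition is_circuit (V : finType) (C : {set {set V}}) (d : V -> nat)
  (x : cols d -> int) : Prop :=
  [/\ in_kernel C d x,
      supp x != set0,
      (\big[gcdn/0%N]_(i : cols d) `|x i|%N = 1%N)
    & forall y : cols d -> int, in_kernel C d y -> supp y != set0 ->
        supp y \subset supp x -> supp y = supp x].

Arguments is_circuit {V} C d x.

Definition unimodular (V : finType) (C : {set {set V}}) (d : V -> nat) : Prop :=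
  forall x : cols d -> int, is_circuit C d x ->
    forall i, x i \in [:: 0; 1; -1].

Definition minus_ground (V : finType) (v : V) : finType := {u : V | u != v}.

Definition link (V : finType) (C : {set {set V}}) (v : V) : {set {set minus_ground v}} :=
  [set [set u : minus_ground v | val u \in F] | F : {set V} in C & v \in F].

(* Main.v *)
Require Import Defs.
From mathcomp Require Import all_boot all_order all_algebra.
From Stdlib Require Import Classical.
Set Implicit Arguments. Unset Strict Implicit. Unset Printing Implicit Defensive.
Import GRing.Theory Num.Theory.

Section Gen.
Local Open Scope ring_scope.
Variables (W : finType) (dd : W -> nat) (K : {set {set W}}).

Definition Ab (F : {set W}) (e i : cols dd) : bool := [forall u in F, e u == i u].
Lemma AentryE F e i : Aentry F e i = (Ab F e i)%:R. Proof. by []. Qed.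

Lemma ker_ext (x x' : cols dd -> int) : (forall i, x i = x' i) ->
  in_kernel K dd x -> in_kernel K dd x'.
Proof.
move=> E hx F e hF; rewrite -[RHS](hx F e hF).
by apply: eq_bigr => i _; rewrite E.
Qed.

Lemma kerB (x y : cols dd -> int) : in_kernel K dd x -> in_kernel K dd y ->
  in_kernel K dd (fun i => x i - y i).
Proof.
move=> hx hy F e hF; under eq_bigr do rewrite mulrBr.
by rewrite sumrB hx // hy // subrr.
Qed.

Lemma kerD (x y : cols dd -> int) : in_kernel K dd x -> in_kernel K dd y ->
  in_kernel K dd (fun i => x i + y i).
Proof.
move=> hx hy F e hF; under eq_bigr do rewrite mulrDr.
by rewrite big_split /= hx // hy // addr0.
Qed.

Lemma kerZ c (x : cols dd -> int) : in_kernel K dd x ->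
  in_kernel K dd (fun i => c * x i).
Proof.
move=> hx F e hF; under eq_bigr do rewrite mulrCA.
by rewrite -mulr_sumr hx // mulr0.
Qed.

Lemma kerZK c (x : cols dd -> int) : c != 0 -> in_kernel K dd (fun i => c * x i) ->
  in_kernel K dd x.
Proof.
move=> c0 hx F e hF; have := hx F e hF.
under eq_bigr do rewrite mulrCA.
by rewrite -mulr_sumr => /eqP; rewrite mulf_eq0 (negbTE c0) => /eqP.
Qed.

Lemma facet_exists G : G \in K -> exists2 H, is_facet K H & G \subset H.
Proof.
move=> GK.
pose P := [pred H : {set W} | (H \in K) && (G \subset H)].
have PG : P G by rewrite /= GK subxx.
case: (arg_maxnP (fun H : {set W} => #|H|) PG) => H /andP[HK GH] Hmax.
exists H => //; apply/andP; split => //.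
apply/forall_inP => H' H'K; apply/implyP => HH'.
rewrite eq_sym eqEcard HH' /=; apply: Hmax; rewrite /= H'K.
exact: subset_trans GH HH'.
Qed.

Definition merge (H : {set W}) (a b : cols dd) : cols dd :=
  [ffun u => if u \in H then a u else b u].

Lemma face_marg (x : cols dd -> int) G e : in_kernel K dd x -> G \in K ->
  \sum_i Aentry G e i * x i = 0.
Proof.
move=> hx GK; case: (facet_exists GK) => H HF GH.
pose P f i := ((f == merge H f e) && Ab G e f) && Ab H f i.
have PE f i : P f i = (f == merge H i e) && Ab G e i.
  rewrite /P; apply/idP/idP.
    case/andP => /andP[h1 h2] h3; apply/andP; split.
      apply/eqP/ffunP => u; rewrite [in RHS]ffunE.
      case uH: (u \in H); first exact/eqP/(forall_inP h3 u uH).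
      by rewrite {1}(eqP h1) ffunE uH.
    apply/forall_inP => u uG; have uH := subsetP GH u uG.
    by rewrite (eqP (forall_inP h2 u uG)) (eqP (forall_inP h3 u uH)).
  case/andP => /eqP -> h; rewrite -andbA; apply/and3P; split.
  - by apply/eqP/ffunP => u; rewrite !ffunE; case: (u \in H).
  - apply/forall_inP => u uG; rewrite ffunE (subsetP GH u uG).
    exact: (forall_inP h u uG).
  - by apply/forall_inP => u uH; rewrite ffunE uH.
have step i : Aentry G e i = \sum_f (P f i)%:R.
  rewrite (bigD1 (merge H i e)) //= big1 ?addr0.
    by rewrite PE eqxx.
  by move=> f hf; rewrite PE (negbTE hf).
under eq_bigr do rewrite step mulr_suml.
rewrite exchange_big /= big1 // => f _.
rewrite -[RHS](mulr0 ((f == merge H f e) && Ab G e f)%:R).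
rewrite -[in RHS](hx H f HF) mulr_sumr; apply: eq_bigr => i _.
by rewrite /P -mulnb natrM mulrA.
Qed.

Lemma biggcd_dvd (I : finType) (f : I -> nat) i : (\big[gcdn/0%N]_j f j %| f i)%N.
Proof. by rewrite (bigD1 i) //= dvdn_gcdl. Qed.

Lemma dvd_biggcd (I : finType) (f : I -> nat) m :
  (forall i, m %| f i)%N -> (m %| \big[gcdn/0%N]_i f i)%N.
Proof.
move=> h; apply: (big_ind (fun k => m %| k)%N) => //.
by move=> a b ha hb; rewrite dvdn_gcd ha hb.
Qed.

Lemma circuit_prop (y w : cols dd -> int) : is_circuit K dd y ->
  in_kernel K dd w -> supp w != set0 -> supp w \subset supp y ->
  supp w = supp y /\
  exists c c', [/\ c != 0, c' != 0 & forall j, c * w j = c' * y j].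
Proof.
case=> ky ny _ hmin kw nw sw; have Ew := hmin w kw nw sw.
split => //.
case/set0Pn: ny => j0; rewrite inE => yj0.
have wj0 : w j0 != 0.
  by have: j0 \in supp w; [rewrite Ew inE | rewrite inE].
exists (y j0), (w j0); split => //.
pose t j := y j0 * w j - w j0 * y j.
have kt : in_kernel K dd t by apply: kerB; apply: kerZ.
have st : supp t \subset supp y.
  apply/subsetP => j; rewrite !inE; apply: contraNneq => yj.
  have wj : w j = 0.
    case: (eqVneq (w j) 0) => // wjn.
    by have: j \in supp y; [rewrite -Ew inE | rewrite inE yj eqxx].
  by rewrite /t yj wj !mulr0 subrr.
have t0 : supp t = set0.
  case: (eqVneq (supp t) set0) => // nt.
  have := hmin t kt nt st => Et.
  have: j0 \in supp t by rewrite Et inE.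
  by rewrite inE /t mulrC subrr eqxx.
move=> j; have: j \notin supp t by rewrite t0 inE.
by rewrite inE negbK subr_eq0 => /eqP.
Qed.

End Gen.
Section Main.
Local Open Scope ring_scope.
Variables (V : finType) (C : {set {set V}}) (d : V -> nat) (v : V).
Hypothesis hd : forall u : V, (2 <= d u)%N.
Local Notation V' := (minus_ground v).
Local Notation d' := (fun u : minus_ground v => d (val u)).

Lemma bl (b : bool) u : (b < d u)%N.
Proof. by apply: leq_trans (hd u); case: b. Qed.

Definition proj (i : cols d) : cols d' := [ffun u : V' => i (val u)].

Definition jfun (j : cols d') (b : bool) (u : V) : 'I_(d u) :=
  match eqVneq u v with
  | EqNotNeq _ => Ordinal (bl b u)
  | NeqNotEq h => j (exist _ u h)
  end.

Definition join (j : cols d') (b : bool) : cols d := [ffun u => jfun j b u].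

Lemma join_v (j : cols d') (b : bool) : nat_of_ord (join j b v) = b.
Proof. by rewrite ffunE /jfun; case: eqVneq => //= h; exfalso; move: (h); rewrite eqxx. Qed.

Lemma join_val (j : cols d') (b : bool) (u : V) (h : u != v) : join j b u = j (exist _ u h).
Proof.
rewrite ffunE /jfun; case: eqVneq => [E|h']; first by exfalso; move: (h); rewrite E eqxx.
by rewrite (bool_irrelevance h' h).
Qed.

Lemma proj_join (j : cols d') (b : bool) : proj (join j b) = j.
Proof.
apply/ffunP => -[u h]; rewrite ffunE /=.
exact: join_val.
Qed.

Lemma join_proj (i : cols d) (b : bool) : nat_of_ord (i v) = b -> join (proj i) b = i.
Proof.
move=> hb; apply/ffunP => u; case: (eqVneq u v) => [E|h].
  apply: val_inj; rewrite ffunE /jfun; case: eqVneq => [E'|h'].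
    by rewrite /= E hb.
  by exfalso; move: (h'); rewrite E eqxx.
by rewrite (join_val _ _ h) ffunE.
Qed.

Lemma sum_slice (f : cols d -> int) (b : bool) :
  (forall i : cols d, nat_of_ord (i v) != b -> f i = 0) ->
  \sum_i f i = \sum_j f (join j b).
Proof.
move=> hf; rewrite (bigID (fun i : cols d => nat_of_ord (i v) == b)) /=.
rewrite [X in _ + X]big1 ?addr0; last by move=> i /hf.
rewrite (reindex_onto (fun j => join j b) proj) /=; last first.
  by move=> i /eqP /join_proj.
by apply: eq_bigl => j; rewrite join_v proj_join !eqxx.
Qed.

Definition lset (F : {set V}) : {set V'} := [set u : V' | val u \in F].

Lemma Ab_join (F : {set V}) (e : cols d) (j : cols d') (b : bool) : Ab F e (join j b) =
  ((v \in F) ==> (nat_of_ord (e v) == b)) && Ab (lset F) (proj e) j.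
Proof.
apply/idP/andP.
  move=> H; split.
    apply/implyP => vF; have := forall_inP H v vF.
    by move/eqP => ->; rewrite join_v.
  apply/forall_inP => -[u h]; rewrite inE /= => uF.
  have := forall_inP H u uF; rewrite (join_val _ _ h).
  by rewrite ffunE.
case=> H1 H2; apply/forall_inP => u uF.
case: (eqVneq u v) => [E|h].
  rewrite E in uF *; apply/eqP/val_inj; rewrite /= join_v.
  exact/eqP/(implyP H1 uF).
have := forall_inP H2 (exist _ u h); rewrite inE /= => /(_ uF).
by rewrite ffunE (join_val _ _ h).
Qed.

Definition ext (y : cols d' -> int) (b : bool) (i : cols d) : int :=
  if nat_of_ord (i v) == b then y (proj i) else 0.

Lemma ext_join (y : cols d' -> int) (b : bool) (j : cols d') : ext y b (join j b) = y j.
Proof. by rewrite /ext join_v eqxx proj_join. Qed.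

Lemma ext_join' (y : cols d' -> int) (b : bool) (j : cols d') : ext y (~~ b) (join j b) = 0.
Proof. by rewrite /ext join_v; case: b. Qed.

Lemma slice_marg (F : {set V}) (e : cols d) (y : cols d' -> int) (b : bool) :
  \sum_i Aentry F e i * ext y b i =
  ((v \in F) ==> (nat_of_ord (e v) == b))%:R *
    \sum_j Aentry (lset F) (proj e) j * y j.
Proof.
rewrite (@sum_slice _ b); last by move=> i hi; rewrite /ext (negbTE hi) mulr0.
rewrite mulr_sumr; apply: eq_bigr => j _.
by rewrite ext_join !AentryE Ab_join -mulnb natrM mulrA.
Qed.

Lemma lset_link F : F \in C -> v \in F -> lset F \in link C v.
Proof. by move=> FC vF; apply/imsetP; exists F => //; rewrite inE FC vF. Qed.

Lemma ker_x (y : cols d' -> int) : in_kernel (link C v) d' y ->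
  in_kernel C d (fun i => ext y false i - ext y true i).
Proof.
move=> hy F e /andP[FC _].
under eq_bigr do rewrite mulrBr.
rewrite sumrB !slice_marg.
case vF: (v \in F); last by rewrite /= subrr.
by rewrite (face_marg _ hy (lset_link FC vF)) !mulr0 subrr.
Qed.

Lemma ker_slice (z : cols d -> int) (b : bool) : in_kernel C d z ->
  in_kernel (link C v) d' (fun j => z (join j b)).
Proof.
move=> hz G e' /andP[/imsetP[F] ] .
rewrite inE => /andP[FC vF] -> _.
have h0 := face_marg (join e' b) hz FC.
rewrite (@sum_slice _ b) in h0; last first.
  move=> i hi; rewrite AentryE.
  suff -> : Ab F (join e' b) i = false by rewrite mul0r.
  apply/negbTE/forall_inP => /(_ v vF) /eqP E.
  by move: hi; rewrite -E join_v eqxx.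
rewrite -[RHS]h0; apply: eq_bigr => j _.
by rewrite !AentryE Ab_join vF join_v eqxx proj_join.
Qed.


Lemma main_unimod : unimodular C d -> unimodular (link C v) d'.
Proof.
move=> hU y hy j.
have [ky ny gy hmin] := hy.
have gcd_of (x : cols d -> int) : (forall j, x (join j false) = y j) ->
    (\big[gcdn/0%N]_i `|x i|%N = 1)%N.
  move=> hx; apply/eqP; rewrite -dvdn1 -gy; apply: dvd_biggcd => j'.
  rewrite -hx; exact: biggcd_dvd.
have supp_of (x : cols d -> int) : (forall j, x (join j false) = y j) -> supp x != set0.
  move=> hx; case/set0Pn: ny => j'; rewrite inE => yj; apply/set0Pn.
  by exists (join j' false); rewrite inE hx.
case: (classic (in_kernel C d (ext y false))) => k0.
  have cu : is_circuit C d (ext y false).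
    split => //; [exact: supp_of (ext_join y false) | exact: gcd_of (ext_join y false) |].
    move=> z kz nz sz.
    pose w := fun j => z (join j false).
    have kw : in_kernel (link C v) d' w := ker_slice false kz.
    have sw : supp w \subset supp y.
      apply/subsetP => j'; rewrite !inE => wj.
      by have := subsetP sz (join j' false); rewrite !inE ext_join; apply.
    have zi i : z i != 0 -> join (proj i) false = i /\ y (proj i) != 0.
      move=> zin; have := subsetP sz i; rewrite !inE => /(_ zin).
      rewrite /ext; case: ifP => // /eqP E yi; split => //; exact: join_proj.
    have nw : supp w != set0.
      case/set0Pn: nz => i; rewrite inE => zin; have [E _] := zi i zin.
      by apply/set0Pn; exists (proj i); rewrite inE /w E.
    have Ew := hmin w kw nw sw.
    apply/eqP; rewrite eqEsubset sz; apply/subsetP => i; rewrite !inE /ext.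
    case: ifP => // /eqP E yi.
    have: proj i \in supp w by rewrite Ew inE.
    by rewrite inE /w join_proj.
  by have := hU _ cu (join j false); rewrite ext_join.
pose x i := ext y false i - ext y true i.
have xj j' : x (join j' false) = y j'.
  by rewrite /x ext_join (ext_join' y false) subr0.
have kx : in_kernel C d x := ker_x ky.
have xi i : x i != 0 -> exists b, join (proj i) b = i /\ y (proj i) != 0.
  rewrite /x /ext; case: ifP => /eqP E0; case: ifP => /eqP E1.
  - by move: E1; rewrite E0.
  - by rewrite subr0 => yi; exists false; split => //; exact: join_proj.
  - by rewrite sub0r oppr_eq0 => yi; exists true; split => //; exact: join_proj.
  - by rewrite subrr eqxx.
have cx : is_circuit C d x.
  split => //; [exact: supp_of xj | exact: gcd_of xj |].
  move=> z kz nz sz.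
  pose w b := fun j => z (join j b).
  have kw b : in_kernel (link C v) d' (w b) := ker_slice b kz.
  have sw b : supp (w b) \subset supp y.
    apply/subsetP => j'; rewrite !inE => wj.
    have := subsetP sz (join j' b); rewrite !inE => /(_ wj) /xi [b' [_]].
    by rewrite proj_join.
  have zi i : z i != 0 -> exists b, join (proj i) b = i /\ y (proj i) != 0.
    by move=> zin; apply: xi; have := subsetP sz i; rewrite !inE; apply.
  have nw b : supp (w b) != set0.
    apply/negP => /eqP w0.
    have zb i : z i != 0 -> join (proj i) (~~ b) = i.
      move=> zin; case: (zi i zin) => b' [E _].
      case: (eqVneq b' b) => [Eb|Eb].
        have: proj i \in supp (w b) by rewrite inE /w -Eb E.
        by rewrite w0 inE.
      have -> : ~~ b = b' by move: Eb; clear; case: b; case: b'.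
      exact: E.
    have nw' : supp (w (~~ b)) != set0.
      case/set0Pn: nz => i; rewrite inE => zin; apply/set0Pn; exists (proj i).
      by rewrite inE /w zb.
    have [_ [c [c' [c0 c'0 hc]]]] := circuit_prop hy (kw _) nw' (sw _).
    have kb : in_kernel C d (ext y (~~ b)).
      apply: (kerZK c'0); apply: (ker_ext _ (kerZ c kz)) => i.
      rewrite /ext; case: ifP => /eqP E.
        by rewrite -hc /w (join_proj E).
      rewrite mulr0; case: (eqVneq (z i) 0) => [->|zin]; first by rewrite mulr0.
      by exfalso; apply: E; rewrite -(zb i zin) join_v.
    apply: k0; destruct b; simpl in kb => //.
    by apply: (ker_ext _ (kerD kx kb)) => i; rewrite /x subrK.
  have Ew b := (circuit_prop hy (kw b) (nw b) (sw b)).1.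
  apply/eqP; rewrite eqEsubset sz; apply/subsetP => i; rewrite inE => /xi [b [E yi]].
  have: proj i \in supp (w b) by rewrite Ew inE.
  by rewrite !inE /w E.
by have := hU _ cx (join j false); rewrite xj.
Qed.

End Main.

Unset Implicit Arguments.
Theorem corollary7p4 (V : finType) (C : {set {set V}}) (d : V -> nat) (v : V) :
  is_complex C ->
  (forall u : V, (2 <= d u)%N) ->
  unimodular C d ->
  [set v] \in C ->
  unimodular (link C v) (fun u : minus_ground v => d (val u)).
Proof. by move=> _ hd hU _; exact: main_unimod. Qed.
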